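(* Let $\omega$ be a character (non-zero complex homomorphism, not necessarily continuous) of $C(X)'_{00}$, and let $x\in X$ be the unique point such that $\omega$ restricted to $C(X)$ is evaluation at $x$. Then there exists a sequence $(c_k)_{k\in\mathbb{Z}}$ of complex numbers with $c_0=1$ such that $\omega(f\delta^k)=c_kf(x)$ for all $k\in\mathbb{Z}$ and all $f\in C(X)$ with $\mathrm{supp}(f)\subset\mathrm{Fix}_k(\sigma)$.
   Context: Let $X$ be a non-empty compact Hausdorff space and $\sigma:X\to X$ a homeomorphism; $\mathrm{Fix}_k(\sigma)=\{x:\sigma^kx=x\}$, $\mathrm{supp}(f)$ is the closure of $\{f\ne0\}$. $C(X)$ is the algebra of continuous complex functions. $c_{00}(\Sigma)$ is the unital algebra of finite formal sums $\sum_kf_k\delta^k$ ($f_k\in C(X)$) with multiplication determined by $f\delta^k\cdot g\delta^l=f\,(g\circ\sigma^{-k})\,\delta^{k+l}$ (a subalgebra of the twisted convolution algebra $\ell^1(\mathbb{Z},C(X))$ for the action $f\mapsto f\circ\sigma^{-1}$); $C(X)$ is embedded as $\{f\delta^0\}$. $C(X)'_{00}$ is the commutant of $C(X)$ in $c_{00}(\Sigma)$; it equals $\{\sum_kf_k\delta^k:\mathrm{supp}(f_k)\subset\mathrm{Fix}_k(\sigma)\ \forall k\}$ and is commutative. *)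

(* Defs.v *)
From HB Require Import structures.
From mathcomp Require Import all_boot all_order all_algebra.
From mathcomp Require Import all_classical all_reals all_analysis.
From mathcomp Require Import complex.
Set Implicit Arguments. Unset Strict Implicit. Unset Printing Implicit Defensive.
Import Order.TTheory GRing.Theory Num.Theory.
Import numFieldNormedType.Exports.
Local Open Scope classical_set_scope.
Local Open Scope ring_scope.
Local Open Scope complex_scope.

(* The homeomorphism sigma is given by s together with its inverse si.
   iterz s si k = sigma^k for k : int. *)
Definition iterz {X : Type} (s si : X -> X) (k : int) : X -> X :=
  match k with
  | Posz n => iter n s
  | Negz n => iter n.+1 si
  end.

Definition Fixk {X : Type} (s si : X -> X) (k : int) : set X :=
  [set x | iterz s si k x = x].

Definition supp {X : topologicalType} {R : rcfType} (f : X -> R[i]) : set X :=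
  closure [set x | f x != 0].

(* An element sum_k F_k delta^k of c_00(Sigma), represented by its
   coefficient family F : int -> (X -> C). *)
Definition in_c00 {X : topologicalType} {R : realType} (F : int -> X -> R[i]) : Prop :=
  (forall k, continuous (F k : X -> (R[i])^o)) /\ finite_set [set k | F k != (fun=> 0)].

Definition in_comm00 {X : topologicalType} {R : realType} (s si : X -> X)
  (F : int -> X -> R[i]) : Prop :=
  in_c00 F /\ forall k, supp (F k) `<=` Fixk s si k.

Definition mono {X : Type} {R : rcfType} (f : X -> R[i]) (k : int) : int -> X -> R[i] :=
  fun l => if l == k then f else (fun=> 0).

Definition c00_add {X : Type} {R : rcfType} (F G : int -> X -> R[i]) : int -> X -> R[i] :=
  fun k x => F k x + G k x.

Definition c00_scale {X : Type} {R : rcfType} (a : R[i]) (F : int -> X -> R[i]) : int -> X -> R[i] :=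
  fun k x => a * F k x.

(* Twisted convolution: (f delta^k)(g delta^l) = f (g o sigma^{-k}) delta^(k+l),
   i.e. (F G)_n = sum_k F_k (G_{n-k} o sigma^{-k}). *)
Definition c00_mul {X : Type} {R : rcfType} (s si : X -> X) (F G : int -> X -> R[i])
  : int -> X -> R[i] :=
  fun n x => (\sum_(k \in [set: int]) (F k x * G (n - k)%R (iterz s si (- k)%R x)))%R.

(* Main.v *)
Require Import Defs.
From HB Require Import structures.
From mathcomp Require Import all_boot all_order all_algebra.
From mathcomp Require Import all_classical all_reals all_analysis.
From mathcomp Require Import complex ring.
Import Order.TTheory GRing.Theory Num.Theory.
Import numFieldNormedType.Exports.
Local Open Scope classical_set_scope.
Local Open Scope ring_scope.

Section Alg.
Variables (R : realType) (X : topologicalType) (s si : X -> X).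

Lemma mono_comm (f : X -> R[i]) k : continuous (f : X -> (R[i])^o) ->
  supp f `<=` Fixk s si k -> in_comm00 s si (mono f k).
Proof.
move=> fc fs; split; first split.
- move=> l; rewrite /mono; case: (l == k) => //; exact: cst_continuous.
- apply: (@sub_finite_set _ _ [set k]); last exact: finite_set1.
  move=> l /=; rewrite /mono; case: (l =P k) => [->//|_]; by rewrite eqxx.
- move=> l; rewrite /mono; case: (l =P k) => [->//|_].
  rewrite /supp => y.
  have -> : [set _ : X | (0:R[i]) != 0] = set0.
    by rewrite eqxx; apply/seteqP; split => z.
  by rewrite closure0.
Qed.

Lemma mul_mono0 (g f : X -> R[i]) k :
  c00_mul s si (mono g 0) (mono f k) = mono (fun y => g y * f y) k.
Proof.
apply/funext => n; apply/funext => y; rewrite /c00_mul.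
rewrite -(fsbig_widen [set 0] setT) //; last first.
  move=> j [_ /= /eqP j0]; rewrite /mono ifN //; by rewrite mul0r.
rewrite fsbig_set1 /mono eqxx oppr0 subr0 /=.
by case: (n == k) => //; rewrite mulr0.
Qed.

End Alg.

Section Cx.
Variable R : realType.
Local Notation C := (R[i]).

Definition psi (z : C) : C := sqrtC `|z|.
Definition phi (z : C) : C := z / psi z.

Lemma sqrt_dist_aux (a b : C) : 0 <= b -> b <= a ->
  `|sqrtC a - sqrtC b| <= sqrtC `|a - b|.
Proof.
move=> hb hba; have ha : 0 <= a := le_trans hb hba.
set u := sqrtC a; set v := sqrtC b.
have hv : 0 <= v by rewrite sqrtC_ge0.
have hvu : v <= u by rewrite ler_sqrtC // nnegrE.
have hu : 0 <= u := le_trans hv hvu.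
rewrite ger0_norm ?subr_ge0 // ger0_norm ?subr_ge0 //.
rewrite -[u - v]sqrCK ?subr_ge0 // ler_sqrtC ?nnegrE ?subr_ge0 ?exprn_ge0 //.
have -> : a = u ^+ 2 by rewrite sqrtCK.
have -> : b = v ^+ 2 by rewrite sqrtCK.
rewrite -subr_ge0 (_ : _ - _ = 2 * v * (u - v)); last by ring.
apply: mulr_ge0; [apply: mulr_ge0 => // | rewrite subr_ge0; exact: hvu].
by rewrite subr_ge0.
Qed.

Lemma sqrt_dist (a b : C) : 0 <= a -> 0 <= b ->
  `|sqrtC a - sqrtC b| <= sqrtC `|a - b|.
Proof.
move=> ha hb; have /orP[ab|ba] := real_leVge (ger0_real ha) (ger0_real hb).
  by rewrite (distrC (sqrtC a)) (distrC a); apply: sqrt_dist_aux.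
by apply: sqrt_dist_aux.
Qed.

Lemma psi_ge0 z : 0 <= psi z.
Proof. by rewrite sqrtC_ge0. Qed.

Lemma psi0 : psi 0 = 0.
Proof. by rewrite /psi normr0 sqrtC0. Qed.

Lemma psi_eq0 z : (psi z == 0) = (z == 0).
Proof. by rewrite /psi sqrtC_eq0 normr_eq0. Qed.

Lemma psi_phi z : psi z * phi z = z.
Proof.
rewrite /phi; case: (eqVneq z 0) => [->|z0]; first by rewrite mul0r mulr0.
by rewrite mulrC mulfVK // psi_eq0.
Qed.

Lemma phi0 : phi 0 = 0.
Proof. by rewrite /phi mul0r. Qed.

Lemma phi_eq0 z : phi z != 0 -> z != 0.
Proof. by apply: contraNneq => ->; rewrite phi0. Qed.

Lemma norm_phi z : `|phi z| = psi z.
Proof.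
rewrite /phi normf_div (ger0_norm (psi_ge0 z)).
have -> : `|z| = psi z ^+ 2 by rewrite sqrtCK.
case: (eqVneq (psi z) 0) => [->|p0]; first by rewrite expr2 !mul0r.
by rewrite expr2 mulfK.
Qed.

Lemma psi_cont : continuous (psi : C^o -> C^o).
Proof.
move=> w; apply/(@cvgrPdist_lt _ _ _ _ (@nbhs_filter (R[i]^o : topologicalType) w)) => e e0.
have e20 : 0 < e ^+ 2 by rewrite exprn_gt0.
have : \forall z \near (w : C^o), `|w - z| < e ^+ 2.
  by apply/nbhs_normP; exists (e ^+ 2) => //=.
apply: filterS => z hz.
rewrite /psi; have h1 := @sqrt_dist `|(w : C)| `|(z : C)| (normr_ge0 _) (normr_ge0 _).
apply: (le_lt_trans h1).
apply: (le_lt_trans (y := sqrtC `|w - z|)).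
  by rewrite ler_sqrtC ?nnegrE ?normr_ge0 // ler_dist_dist.
by rewrite -[e]sqrCK ?ltW // ltr_sqrtC ?nnegrE ?normr_ge0 ?exprn_ge0 ?ltW.
Qed.

Lemma phi_cont : continuous (phi : C^o -> C^o).
Proof.
move=> w; case: (eqVneq w 0) => [->|w0].
  apply/(@cvgrPdist_lt _ _ _ _ (@nbhs_filter (R[i]^o : topologicalType) 0)) => e e0.
  have := @cvgr_dist_lt _ _ _ _ (@nbhs_filter (R[i]^o : topologicalType) 0) _ _ (psi_cont 0) _ e0.
  apply: filterS => z; rewrite phi0 psi0 !sub0r !normrN norm_phi.
  by rewrite ger0_norm // psi_ge0.
have pw : psi w != 0 by rewrite psi_eq0.
have FF := @nbhs_filter (R[i]^o : topologicalType) w.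
have H2 := @cvgV _ _ _ FF psi (psi w) pw (psi_cont w).
have H1 : (@id C^o) @ (w : C^o) --> (w : C^o) := @cvg_id _ _.
exact: (@cvgM _ _ _ FF id (fun z => (psi z)^-1) w (psi w)^-1 H1 H2).
Qed.

End Cx.
Arguments psi {R}.
Arguments phi {R}.

Theorem lemma3p1 (R : realType) (X : topologicalType)
  (X_hausdorff : hausdorff_space X) (X_compact : compact [set: X])
  (X_nonempty : [set: X] !=set0)
  (s si : X -> X) (s_cont : continuous s) (si_cont : continuous si)
  (s_si : cancel s si) (si_s : cancel si s)
  (omega : (int -> X -> R[i]) -> R[i])
  (omega_add : forall F G, in_comm00 s si F -> in_comm00 s si G ->
     omega (c00_add F G) = omega F + omega G)
  (omega_scale : forall (a : R[i]) F, in_comm00 s si F ->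
     omega (c00_scale a F) = a * omega F)
  (omega_mul : forall F G, in_comm00 s si F -> in_comm00 s si G ->
     omega (c00_mul s si F G) = omega F * omega G)
  (omega_nz : exists F, in_comm00 s si F /\ omega F != 0)
  (x : X)
  (omega_x : forall f : X -> R[i], continuous (f : X -> (R[i])^o) -> omega (mono f 0) = f x) :
  exists c : int -> R[i], c 0 = 1 /\
    forall (k : int) (f : X -> R[i]), continuous (f : X -> (R[i])^o) ->
      supp f `<=` Fixk s si k -> omega (mono f k) = c k * f x.
Proof.
have supp0 : forall g : X -> R[i], supp g `<=` Fixk s si 0 by move=> g y _.
have mul0 : forall (g f : X -> R[i]) k, continuous (g : X -> (R[i])^o) ->
    continuous (f : X -> (R[i])^o) -> supp f `<=` Fixk s si k ->
    omega (mono (fun y => g y * f y) k) = g x * omega (mono f k).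
  move=> g f k gc fc fs.
  rewrite -(@mul_mono0 _ _ s si).
  rewrite (omega_mul _ _ (@mono_comm _ _ s si g 0 gc (supp0 g)) (@mono_comm _ _ s si f k fc fs)).
  by rewrite omega_x.
have key : forall k, exists ck : R[i], forall f : X -> R[i],
    continuous (f : X -> (R[i])^o) -> supp f `<=` Fixk s si k ->
    omega (mono f k) = ck * f x.
  move=> k.
  have [[f0 [f0c f0s f0x]]|nf] := pselect (exists f0 : X -> R[i],
    [/\ continuous (f0 : X -> (R[i])^o), supp f0 `<=` Fixk s si k & f0 x != 0]).
    exists (omega (mono f0 k) / f0 x); move=> f fc fs.
    have E1 := mul0 f0 f k f0c fc fs.
    have E2 := mul0 f f0 k fc f0c f0s.
    have E : (fun y => f0 y * f y) = (fun y => f y * f0 y).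
      by apply/funext => y; rewrite mulrC.
    rewrite E E2 in E1.
    apply: (mulfI f0x); by rewrite -E1 mulrA [f0 x * _]mulrC mulfVK // mulrC.
  exists 0; move=> f fc fs.
  have fx0 : f x = 0.
    by apply/eqP; apply/negPn/negP => fx; apply: nf; exists f.
  rewrite fx0 mulr0.
  have -> : mono f k = mono (fun y => psi (f y) * phi (f y)) k.
    by congr mono; apply/funext => y; rewrite psi_phi.
  rewrite mul0; first by rewrite fx0 psi0 mul0r.
  - move=> y; exact: (@continuous_comp X (R[i]^o) (R[i]^o) f psi y (fc y) (@psi_cont R (f y))).
  - move=> y; exact: (@continuous_comp X (R[i]^o) (R[i]^o) f phi y (fc y) (@phi_cont R (f y))).
  - apply: subset_trans fs; apply: closureS => y /=; exact: phi_eq0.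
have [c Hc] := choice key.
exists c; split; last exact: Hc.
have := Hc 0 (fun=> 1) (@cst_continuous _ (R[i]^o) 1) (supp0 _).
by rewrite omega_x ?mulr1 //; exact: (@cst_continuous _ (R[i]^o) 1).
Qed.
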